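(* For an integer $n\ge 1$, let $d_n$ be the smallest constant such that $$\sum_{k=1}^{n}\Big(\frac{1}{k}\sum_{j=1}^{k}a_j\Big)^2\leq d_n\sum_{k=1}^{n}a_k^2\qquad\text{for all }(a_1,\ldots,a_n)\in\mathbb{R}^n.$$ Then for every $n\ge 3$, $$4\Big(1-\frac{4}{\ln n+4}\Big)\le d_n\le 4\Big(1-\frac{8}{(\ln n+4)^2}\Big).$$ *)

(* Defs.v *)
From HB Require Import structures.
From mathcomp Require Import all_boot all_order all_algebra.
From mathcomp Require Import all_classical all_reals all_analysis.
Set Implicit Arguments. Unset Strict Implicit. Unset Printing Implicit Defensive.
Import Order.TTheory GRing.Theory Num.Theory.
Local Open Scope ring_scope.

(* a : 'I_n -> R encodes (a_1,...,a_n) with a_j = a (j-1).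
   hardy_lhs n a = sum_{k=1}^n ((1/k) sum_{j=1}^k a_j)^2 *)
Definition hardy_lhs (R : realType) (n : nat) (a : 'I_n -> R) : R :=
  \sum_(k < n) ((k.+1%:R)^-1 * \sum_(j < n | (j <= k)%N) a j) ^+ 2.

Definition hardy_rhs (R : realType) (n : nat) (a : 'I_n -> R) : R :=
  \sum_(k < n) (a k) ^+ 2.

Definition hardy_admissible (R : realType) (n : nat) (C : R) : Prop :=
  forall a : 'I_n -> R, hardy_lhs a <= C * hardy_rhs a.

Definition is_smallest_hardy_const (R : realType) (n : nat) (d : R) : Prop :=
  hardy_admissible n d /\ forall C : R, hardy_admissible n C -> d <= C.

(* Main.v *)
Require Import Defs.
From HB Require Import structures.
From mathcomp Require Import all_boot all_order all_algebra.
From mathcomp Require Import all_classical all_reals all_analysis.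
From mathcomp Require Import ring lra zify.
Import Order.TTheory GRing.Theory Num.Theory.
Local Open Scope ring_scope.

(* Proof via a ground-state (weighted
   AM-GM) argument for the upper bound and the test vector
   a_k = sqrt k - sqrt (k-1) for the lower bound; d_n is the supremum of
   the Rayleigh quotients. *)

Lemma amgm_term (R : realFieldType) (x y t : R) : 0 < t ->
  (1 - t) * x ^+ 2 + (1 - t^-1) * y ^+ 2 <= (x - y) ^+ 2.
Proof.
move=> t0.
have tn0 : t != 0 by rewrite gt_eqF.
have -> : (x - y) ^+ 2 = (1 - t) * x ^+ 2 + (1 - t^-1) * y ^+ 2 + (t * x - y) ^+ 2 / t.
  by field.
by rewrite lerDl divr_ge0 ?sqr_ge0 // ltW.
Qed.

Lemma key_sum (R : realFieldType) (n : nat) (A t : nat -> R) :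
  (1 <= n)%N -> A 0%N = 0 -> t 1%N = 0 -> t n.+1 = 1 ->
  (forall k, (2 <= k <= n)%N -> 0 < t k) ->
  \sum_(1 <= k < n.+1) (2 - t k - (t k.+1)^-1) * A k ^+ 2
    <= \sum_(1 <= k < n.+1) (A k - A k.-1) ^+ 2.
Proof.
move=> n1 A0 t1 tn tpos.
apply: (@le_trans _ _ (\sum_(1 <= k < n.+1)
   ((1 - t k) * A k ^+ 2 + (1 - (t k)^-1) * A k.-1 ^+ 2))); last first.
  apply: ler_sum_nat => k /andP[k1 kn].
  have [->|kn1] := eqVneq k 1%N.
    by rewrite t1 /= A0 invr0 !subr0 mul1r expr0n /= mulr0 addr0.
  apply: amgm_term; apply: tpos.
  by rewrite ltn_neqAle eq_sym kn1 k1 /= -ltnS.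
rewrite big_split /=.
set F := fun k => (1 - (t k.+1)^-1) * A k ^+ 2.
have -> : \sum_(1 <= k < n.+1) (1 - (t k)^-1) * A k.-1 ^+ 2
          = \sum_(0 <= k < n) F k.
  by rewrite big_add1 /=.
have -> : \sum_(0 <= k < n) F k = \sum_(1 <= k < n.+1) F k.
  rewrite big_ltn // big_nat_recr //= /F A0 tn invr1 subrr !mul0r expr0n /=.
  by rewrite mulr0 add0r addr0.
rewrite -big_split /=; apply: ler_sum_nat => k _.
by rewrite /F -mulrDl; apply: ler_wpM2r; [exact: sqr_ge0|lra].
Qed.

Definition Hh (R : realType) (m : nat) : R := \sum_(0 <= j < m) (j.+1%:R)^-1.

Lemma HhS (R : realType) m : Hh R m.+1 = Hh R m + (m.+1%:R)^-1.
Proof. by rewrite /Hh big_nat_recr. Qed.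

Lemma Hh_ge0 (R : realType) m : 0 <= Hh R m.
Proof. by apply: sumr_ge0 => j _; rewrite invr_ge0. Qed.

Lemma Hh_le_lin (R : realType) m : Hh R m <= (m%:R + 6) / 4.
Proof.
elim: m => [|m IH]; first by rewrite /Hh big_geq //; lra.
rewrite HhS.
case: m IH => [|[|[|m]]] IH.
- rewrite /Hh big_geq //; lra.
- rewrite HhS /Hh big_geq //; lra.
- rewrite HhS HhS /Hh big_geq //; lra.
have h : (m.+4%:R : R)^-1 <= 1/4.
  rewrite div1r lef_pV2 ?posrE ?ltr0n // -[4]/(4%:R) ler_nat //.
have e : (m.+4%:R : R) = m.+3%:R + 1 by rewrite -[m.+4]addn1 natrD.
rewrite e in h |- *; lra.
Qed.

Lemma ln_step_lo (R : realType) (j : nat) : (1 <= j)%N ->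
  (j.+1%:R : R)^-1 <= ln (j.+1%:R : R) - ln (j%:R).
Proof.
move=> j1.
have hj : (0 : R) < j%:R by rewrite ltr0n.
rewrite -natr1.
have := @le_ln1Dx R (- (j%:R + 1)^-1).
have -> : 1 - (j%:R + 1 : R)^-1 = j%:R / (j%:R + 1).
  field; lra.
rewrite ln_div ?posrE; [|lra|lra].
have : (j%:R + 1 : R)^-1 < 1.
  rewrite invf_lt1; lra.
move=> h1 h2; have := h2 ltac:(lra); lra.
Qed.

Lemma ln_step_hi (R : realType) (j : nat) : (1 <= j)%N ->
  ln (j.+1%:R : R) - ln (j%:R) <= (j%:R)^-1.
Proof.
move=> j1.
have hj : (0 : R) < j%:R by rewrite ltr0n.
rewrite -natr1.
have := @le_ln1Dx R ((j%:R)^-1).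
have -> : 1 + (j%:R : R)^-1 = (j%:R + 1) / j%:R.
  field; lra.
rewrite ln_div ?posrE; [|lra|lra].
have : 0 < (j%:R : R)^-1 by rewrite invr_gt0.
move=> h1 h2; apply: h2; lra.
Qed.

Lemma Hh_le_ln (R : realType) (m : nat) : (1 <= m)%N -> Hh R m <= 1 + ln (m%:R).
Proof.
case: m => // m _.
elim: m => [|m IH]; first by rewrite /Hh big_nat1 ln1; lra.
rewrite HhS; move: (@ln_step_lo R m.+1 isT) IH; set x := (m.+2%:R)^-1; set y := ln (m.+2%:R); set z := ln (m.+1%:R); set w := Hh R m.+1; lra.
Qed.

Lemma ln_le_Hh (R : realType) (m : nat) : ln (m.+1%:R : R) <= Hh R m.
Proof.
elim: m => [|m IH]; first by rewrite ln1 /Hh big_geq.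
rewrite HhS.
move: (@ln_step_hi R m.+1 isT) IH.
set y := ln (m.+2%:R); set z := ln (m.+1%:R);
set w := Hh R m; set v := (m.+1%:R)^-1. lra.
Qed.

Lemma ln3_ge1 (R : realType) : 1 <= ln (3%:R : R).
Proof.
have e1 : expR (1 : R) <= 3%:R.
  have h6 : (6%:R : R) * (- (6%:R)^-1) = -1 by rewrite mulrN mulfV ?pnatr_eq0.
  have h : expR (- 1 : R) = expR (- (6%:R)^-1) ^+ 6 by rewrite -h6 expRM_natl.
  have h56 : 1 - (6%:R : R)^-1 = 5%:R / 6%:R.
    lra.
  have h2 : 5%:R / 6%:R <= expR (- (6%:R : R)^-1).
    by rewrite -h56; have := @expR_ge1Dx R (- (6%:R)^-1).
  have h3 : (3%:R : R)^-1 <= expR (-1).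
    rewrite h; apply: le_trans (lerXn2r 6 _ _ h2); rewrite ?nnegrE.
    - rewrite !exprS expr0; lra.
    - by rewrite divr_ge0 ?ler0n.
    - by rewrite expR_ge0.
  rewrite expRN in h3.
  rewrite -(invrK (expR 1)) -[X in _ <= X](invrK (3%:R)).
  by rewrite lef_pV2 ?posrE ?invr_gt0 ?expR_gt0 ?ltr0n.
rewrite -[X in X <= _](expRK 1) ler_ln ?posrE ?expR_gt0 ?ltr0n //.
Qed.

Definition gq {R : realFieldType} (W y : R) := y * ((6 * W + 1) / 4 - y).

Lemma gq_le {R : realFieldType} (W y : R) : gq W y <= ((6 * W + 1) / 8) ^+ 2.
Proof.
rewrite -subr_ge0.
have -> : ((6 * W + 1) / 8) ^+ 2 - gq W y = ((6 * W + 1) / 8 - y) ^+ 2 by rewrite /gq; field.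
exact: sqr_ge0.
Qed.

Lemma frac_bound {R : realFieldType} {k : R} : 2 <= k ->
  18 / 10 <= (2 * k + 1) / (2 * k) + 2 * k ^+ 2 / ((k - 1) * (2 * k - 1))
             - (2 * k + 3) / (8 * (2 * k - 1)).
Proof.
move=> k2.
have p1 : 0 < 2 * k by lra.
have p2 : 0 < (k - 1) * (2 * k - 1) by nra.
have p3 : 0 < 8 * (2 * k - 1) by lra.
have e1 : 1 <= (2 * k + 1) / (2 * k) by rewrite ler_pdivlMr //; lra.
have e2 : 7 / 8 <= 2 * k ^+ 2 / ((k - 1) * (2 * k - 1)) - (2 * k + 3) / (8 * (2 * k - 1)).
  have -> : 2 * k ^+ 2 / ((k - 1) * (2 * k - 1)) - (2 * k + 3) / (8 * (2 * k - 1))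
      = (14 * k ^+ 2 - k + 3) / (8 * ((k - 1) * (2 * k - 1))).
    field; apply/andP; split; apply/eqP; lra.
  rewrite ler_pdivlMr; last by lra.
  nra.
lra.
Qed.

Lemma W_bound {R : realFieldType} {W : R} : 5 <= W ->
  2 * ((6 * W + 1) / 8) ^+ 2 <= 18 / 10 * (W ^+ 2 - 8).
Proof. move=> W5; nra. Qed.

Lemma interior_bnd {R : realFieldType} (k W H : R) :
  2 <= k -> 5 <= W -> 0 <= H -> H <= (k + 5) / 4 ->
  0 < gq W ((W + 1) / 2 + H - (k - 1)^-1) -> 0 < gq W ((W + 1) / 2 + H) ->
  0 < gq W ((W + 1) / 2 + H + k^-1) ->
  (1/4 + 2 / (W ^+ 2 - 8)) / k ^+ 2 <=
   2 - (2 * k - 2) / (2 * k - 1) * gq W ((W + 1) / 2 + H - (k - 1)^-1) / gq W ((W + 1) / 2 + H)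
     - ((2 * (k + 1) - 2) / (2 * (k + 1) - 1) * gq W ((W + 1) / 2 + H)
          / gq W ((W + 1) / 2 + H + k^-1))^-1.
Proof.
move=> k2 W5 H0 Hk Gm0 G0 Gp0.
set h := (W + 1) / 2 + H.
set G := gq W h.
have G0' : 0 < G := G0.
have GV : G <= ((6 * W + 1) / 8) ^+ 2 := gq_le W h.
have WB := W_bound W5.
have FB := frac_bound k2.
have W8 : 0 < W ^+ 2 - 8 by nra.
set u := (6 * W + 1) / 4 - 2 * h.
set Q := G / (4 * (2 * k - 1)) - 2 * G / (W ^+ 2 - 8) + u / (2 * (2 * k - 1))
         + (2 * k + 1) / (2 * k) + 2 * k ^+ 2 / ((k - 1) * (2 * k - 1)).
have -> : 2 - (2 * k - 2) / (2 * k - 1) * gq W (h - (k - 1)^-1) / G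
     - ((2 * (k + 1) - 2) / (2 * (k + 1) - 1) * G / gq W (h + k^-1))^-1
     = (1/4 + 2 / (W ^+ 2 - 8)) / k ^+ 2 + Q / (k ^+ 2 * G).
  have hpos : 0 < h by rewrite /h; lra.
  have s0 : 0 < (6 * W + 1) / 4 - h.
    by move: G0'; rewrite /G /gq pmulr_rgt0.
  have kp : 0 < k by lra.
  have hk : 0 < h + k^-1 by have := invr_gt0 k; rewrite kp; lra.
  have s1 : 0 < (6 * W + 1) / 4 - (h + k^-1).
    by move: Gp0; rewrite -/h /gq pmulr_rgt0.
  have kinv : k * k^-1 = 1 by rewrite mulfV //; lra.
  have p1 : 0 < k * ((6 * W + 1) / 4 - (h + k^-1)) by apply: mulr_gt0.
  have p2 : 0 < h * k by apply: mulr_gt0.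
  rewrite /Q /u /G /gq.
  field.
  repeat (apply/andP; split); apply/eqP; nra.
rewrite lerDl; apply: divr_ge0; last by apply: mulr_ge0; [exact: sqr_ge0|exact: ltW].
rewrite /Q.
have t1 : 0 <= G / (4 * (2 * k - 1)) by apply: divr_ge0; lra.
have t2 : 2 * G / (W ^+ 2 - 8) <= 18 / 10.
  rewrite ler_pdivrMr //; lra.
have t3 : - ((2 * k + 3) / (8 * (2 * k - 1))) <= u / (2 * (2 * k - 1)).
  have -> : - ((2 * k + 3) / (8 * (2 * k - 1))) = (- (2 * k + 3) / 4) / (2 * (2 * k - 1)).
    field; lra.
  apply: ler_wpM2r; first by rewrite invr_ge0; lra.
  rewrite /u /h; lra.
lra.
Qed.

Lemma bnd1 {R : realFieldType} (x y W : R) : x = 1 -> y = 2 -> 5 <= W ->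
  (1/4 + 2 / (W ^+ 2 - 8)) / x ^+ 2 <=
   2 - 0 - ((2 * y - 2) / (2 * y - 1) * gq W ((W + 1) / 2 + 0)
          / gq W ((W + 1) / 2 + 1))^-1.
Proof.
move=> -> -> W5.
have W8 : 0 < W ^+ 2 - 8 by nra.
have G1 : gq W ((W + 1) / 2 + 0) = (4 * W ^+ 2 + 3 * W - 1) / 8 by rewrite /gq; field.
have G2 : gq W ((W + 1) / 2 + 1) = (W + 3) * (4 * W - 5) / 8 by rewrite /gq; field.
rewrite G1 G2.
have p1 : 0 < 4 * W ^+ 2 + 3 * W - 1 by nra.
have p2 : 0 < (W + 3) * (4 * W - 5) by nra.
have b1 : 2 * ((4 * W ^+ 2 + 3 * W - 1) / 8) / (W ^+ 2 - 8) <= 17 / 10.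
  rewrite ler_pdivrMr //; nra.
have e : 2 - 0 - ((2 * 2 - 2) / (2 * 2 - 1) * ((4 * W ^+ 2 + 3 * W - 1) / 8)
          / ((W + 3) * (4 * W - 5) / 8))^-1 - (1/4 + 2 / (W ^+ 2 - 8)) / 1 ^+ 2
  = (7/4 * ((4 * W ^+ 2 + 3 * W - 1) / 8) - 3/2 * ((W + 3) * (4 * W - 5) / 8)
     - 2 * ((4 * W ^+ 2 + 3 * W - 1) / 8) / (W ^+ 2 - 8)) / ((4 * W ^+ 2 + 3 * W - 1) / 8).
  field; repeat (apply/andP; split); apply/eqP; nra.
rewrite -subr_ge0 e; apply: divr_ge0; last by lra.
have : 17 / 10 <= 7/4 * ((4 * W ^+ 2 + 3 * W - 1) / 8) - 3/2 * ((W + 3) * (4 * W - 5) / 8).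
  nra.
lra.
Qed.

Lemma bndn {R : realFieldType} (x W H : R) : 3 <= x -> 5 <= W -> 0 <= H -> H <= W - 3 ->
  (1/4 + 2 / (W ^+ 2 - 8)) / x ^+ 2 <=
   2 - (2 * x - 2) / (2 * x - 1) * gq W ((W + 1) / 2 + H - (x - 1)^-1)
          / gq W ((W + 1) / 2 + H) - 1^-1.
Proof.
move=> x3 W5 H0 HW.
have W8 : 0 < W ^+ 2 - 8 by nra.
set h := (W + 1) / 2 + H.
set s := (6 * W + 1) / 4 - h.
have hp : 3 <= h by rewrite /h; lra.
have sp : 11 / 4 <= s by rewrite /s /h; lra.
have Ge : gq W h = h * s by [].
have Gm : gq W (h - (x - 1)^-1) = h * s + (x - 1)^-1 * (h - s) - (x - 1)^-1 ^+ 2.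
  by rewrite /gq -/s /s; ring.
rewrite Ge Gm.
have Gp : 0 < h * s by nra.
have dp : 0 < (x - 1)^-1 by rewrite invr_gt0; lra.
have dd : (x - 1) * (x - 1)^-1 = 1 by rewrite mulfV //; lra.
have mu1 : (1/4 + 2 / (W ^+ 2 - 8)) * (2 * x - 1) <= x ^+ 2 / 4.
  have : 2 / (W ^+ 2 - 8) <= 2 / 17.
    by rewrite ler_pdivrMr // mulrC mulrA ler_pdivlMr; [nra|lra].
  nra.
have e : 2 - (2 * x - 2) / (2 * x - 1) * (h * s + (x - 1)^-1 * (h - s) - (x - 1)^-1 ^+ 2)
          / (h * s) - 1^-1 - (1/4 + 2 / (W ^+ 2 - 8)) / x ^+ 2
  = (x ^+ 2 * (h * s - 2 * h + 2 * s + 2 * (x - 1)^-1)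
      - (1/4 + 2 / (W ^+ 2 - 8)) * (2 * x - 1) * (h * s)) / (x ^+ 2 * (2 * x - 1) * (h * s)).
  field; repeat (apply/andP; split); apply/eqP; nra.
rewrite -subr_ge0 e; apply: divr_ge0; last first.
  apply: mulr_ge0; [apply: mulr_ge0; [exact: sqr_ge0|lra]|lra].
have : 0 <= 3/4 * (h * s) - 2 * h + 2 * s by nra.
have : (1/4 + 2 / (W ^+ 2 - 8)) * (2 * x - 1) * (h * s) <= x ^+ 2 / 4 * (h * s).
  by apply: ler_wpM2r; lra.
have : 0 < x ^+ 2 by nra.
nra.
Qed.

Lemma Hh_mono {R : realType} (m m' : nat) : (m <= m')%N -> Hh R m <= Hh R m'.
Proof.
move=> /subnKC <-; elim: (m' - m)%N => [|d IH]; first by rewrite addn0.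
rewrite addnS HhS; apply: le_trans IH _; rewrite lerDl invr_ge0 //.
Qed.

Lemma Hh0 {R : realType} : Hh R 0 = 0.
Proof. by rewrite /Hh big_geq. Qed.

Lemma Hh1 {R : realType} : Hh R 1 = 1.
Proof. by rewrite HhS Hh0 add0r invr1. Qed.

Lemma upper_main {R : realType} (n : nat) (A : nat -> R) (W : R) :
  (3 <= n)%N -> 5 <= W -> Hh R n.-1 <= W - 3 -> A 0%N = 0 ->
  (1/4 + 2 / (W ^+ 2 - 8)) * \sum_(1 <= k < n.+1) (A k / k%:R) ^+ 2
    <= \sum_(1 <= k < n.+1) (A k - A k.-1) ^+ 2.
Proof.
move=> n3 W5 HW A0.
pose hh k := (W + 1) / 2 + Hh R k.-1.
pose g k := gq W (hh k).
pose t k := if k == 1%N then 0 else if k == n.+1 then 1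
            else (2 * k%:R - 2) / (2 * k%:R - 1) * g k.-1 / g k.
have gpos : forall k, (1 <= k <= n)%N -> 0 < g k.
  move=> k /andP[k1 kn].
  have H0 := Hh_ge0 R k.-1.
  have Hm : Hh R k.-1 <= Hh R n.-1 by apply: Hh_mono; rewrite -!subn1 leq_sub2r.
  rewrite /g /hh /gq; apply: mulr_gt0; lra.
have tpos : forall k, (2 <= k <= n)%N -> 0 < t k.
  move=> k /andP[k2 kn].
  have kn1 : (k == 1%N) = false by case: k k2 {kn} => [|[]].
  have kn2 : (k == n.+1) = false by apply/negbTE; rewrite neq_ltn ltnS kn.
  rewrite /t kn1 kn2.
  have g1 : 0 < g k.-1 by apply: gpos; apply/andP; split; lia.
  have g2 : 0 < g k by apply: gpos; apply/andP; split; lia.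
  have k2' : (2 : R) <= k%:R by rewrite ler_nat.
  apply: mulr_gt0; last by rewrite invr_gt0.
  apply: mulr_gt0 => //; apply: divr_gt0; lra.
have n1 : (1 <= n)%N by apply: leq_trans n3.
have t1 : t 1%N = 0 by rewrite /t eqxx.
have nn : (n.+1 == 1%N) = false by apply/negbTE; rewrite eqSS -lt0n.
have tn : t n.+1 = 1 by rewrite /t nn eqxx.
apply: le_trans (@key_sum _ n A t n1 A0 t1 tn tpos).
rewrite mulr_sumr; apply: ler_sum_nat => k /andP[k1 kn].
have kp : (0 : R) < k%:R by rewrite ltr0n.
have -> : (1/4 + 2 / (W ^+ 2 - 8)) * (A k / k%:R) ^+ 2
        = ((1/4 + 2 / (W ^+ 2 - 8)) / k%:R ^+ 2) * A k ^+ 2.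
  by field; rewrite gt_eqF // gt_eqF //; nra.
apply: ler_wpM2r; first exact: sqr_ge0.
have gm : forall m, g m.+1 = gq W ((W + 1) / 2 + Hh R m.+1 - (m.+2%:R - 1)^-1).
  move=> m; rewrite /g /hh /= HhS -[m.+2%:R]natr1 addrK; congr gq; ring.
have gp : forall m, g m.+3 = gq W ((W + 1) / 2 + Hh R m.+1 + (m.+2%:R)^-1).
  by move=> m; rewrite /g /hh /= HhS addrA.
have g0 : forall m, g m.+2 = gq W ((W + 1) / 2 + Hh R m.+1) by [].
have [->|k1'] := eqVneq k 1%N.
  have e2 : t 2%N = (2 * 2%:R - 2) / (2 * 2%:R - 1) * g 1%N / g 2%N.
    rewrite /t /=; case: eqP => // h2; lia.
  rewrite t1 e2 /g /hh /= Hh0 Hh1.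
  by apply: bnd1.
have [kn'|kn'] := eqVneq k n.
  subst k.
  have nn2 : (n == n.+1) = false by apply/negbTE; rewrite neq_ltn ltnSn.
  have nn1 : (n == 1%N) = false by apply/negbTE; rewrite neq_ltn; apply/orP; right; lia.
  rewrite tn /t nn1 nn2.
  have [m em] : exists m, n = m.+3 by exists (n - 3)%N; lia.
  rewrite em /= in HW |- *.
  rewrite gm.
  have g3 : g m.+3 = gq W ((W + 1) / 2 + Hh R m.+2) by [].
  rewrite g3.
  apply: bndn => //.
  - by rewrite ler_nat.
  - exact: Hh_ge0.
have [m em] : exists m, k = m.+2 by exists (k - 2)%N; lia.
have mn : (m.+3 <= n)%N by lia.
subst k.
have e1 : t m.+2 = (2 * m.+2%:R - 2) / (2 * m.+2%:R - 1) * g m.+1 / g m.+2.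
  rewrite /t; case: eqP => // _; case: eqP => // h; lia.
have e3 : t m.+3 = (2 * m.+3%:R - 2) / (2 * m.+3%:R - 1) * g m.+2 / g m.+3.
  rewrite /t; case: eqP => // _; case: eqP => // h; lia.
have gpm := gpos m.+1 ltac:(lia).
have gp0 := gpos m.+2 ltac:(lia).
have gpp := gpos m.+3 ltac:(lia).
rewrite e1 e3 gm gp g0 -[m.+3%:R]natr1.
rewrite gm in gpm; rewrite gp in gpp; rewrite g0 in gp0.
apply: interior_bnd => //.
- by rewrite ler_nat.
- exact: Hh_ge0.
- have := Hh_le_lin R m.+1; rewrite -[m.+2%:R]natr1; lra.
Qed.

Lemma sum_le_conv {R : realType} (n k : nat) (F : nat -> R) : (k < n)%N ->
  \sum_(j < n | (j <= k)%N) F j = \sum_(0 <= j < k.+1) F j.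
Proof.
move=> kn; rewrite (big_nat_widen 0 k.+1 n) // big_mkord.
by apply: eq_bigl => j.
Qed.

Lemma hardy_upper {R : realType} (n : nat) (a : 'I_n -> R) (W : R) :
  (3 <= n)%N -> 5 <= W -> Hh R n.-1 <= W - 3 ->
  hardy_lhs a <= 4 * (1 - 8 / W ^+ 2) * hardy_rhs a.
Proof.
move=> n3 W5 HW.
pose A k := \sum_(i < n | (i < k)%N) a i.
have A0 : A 0%N = 0 by apply: big1 => i; rewrite ltn0.
have Ad : forall k : 'I_n, A k.+1 - A k = a k.
  move=> k; rewrite /A (bigID (fun i : 'I_n => (i < k)%N)) /=.
  have -> : \sum_(i < n | (i < k.+1)%N && (i < k)%N) a i = \sum_(i < n | (i < k)%N) a i.
    apply: eq_bigl => i; case: (ltnP i k) => h; rewrite ?andbT ?andbF //; lia.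
  rewrite addrAC subrr add0r.
  rewrite (eq_bigl (fun i : 'I_n => i == k)); first by rewrite big_pred1_eq.
  move=> i /=; rewrite ltnS -leqNgt andbC. by rewrite -eqn_leq eq_sym.
have lhsE : hardy_lhs a = \sum_(1 <= k < n.+1) (A k / k%:R) ^+ 2.
  rewrite /hardy_lhs big_add1 /= big_mkord; apply: eq_bigr => k _.
  by rewrite mulrC.
have rhsE : hardy_rhs a = \sum_(1 <= k < n.+1) (A k - A k.-1) ^+ 2.
  rewrite /hardy_rhs big_add1 /= big_mkord; apply: eq_bigr => k _.
  by rewrite Ad.
have key := @upper_main _ n A W n3 W5 HW A0.
rewrite lhsE rhsE.
have W8 : 0 < W ^+ 2 - 8 by nra.
have W0 : 0 < W ^+ 2 by nra.
have e : 4 * (1 - 8 / W ^+ 2) * (1/4 + 2 / (W ^+ 2 - 8)) = 1.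
  by field; rewrite !gt_eqF //; lra.
have D0 : 0 <= 4 * (1 - 8 / W ^+ 2).
  have : 8 / W ^+ 2 <= 1 by rewrite ler_pdivrMr //; lra.
  lra.
set L := \sum_(1 <= k < n.+1) (A k / k%:R) ^+ 2.
have eL : L = 4 * (1 - 8 / W ^+ 2) * ((1/4 + 2 / (W ^+ 2 - 8)) * L).
  by rewrite mulrA e mul1r.
rewrite {1}eL.
by apply: ler_wpM2l.
Qed.

Lemma sqrt_diff_le {R : realType} (x : R) : 0 <= x ->
  (Num.sqrt (x + 1) - Num.sqrt x) ^+ 2 <= (4 * x + 1)^-1.
Proof.
move=> x0.
set p := Num.sqrt (x + 1); set q := Num.sqrt x.
have p2 : p ^+ 2 = x + 1 by rewrite sqr_sqrtr //; lra.
have q2 : q ^+ 2 = x by rewrite sqr_sqrtr.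
have q0 : 0 <= q by apply: sqrtr_ge0.
have pq : q <= p by apply: ler_wsqrtr; lra.
have h1 : 4 * x + 1 <= (p + q) ^+ 2 by nra.
have h0 : 0 < 4 * x + 1 by lra.
have h2 : (p - q) ^+ 2 * (p + q) ^+ 2 = 1.
  by rewrite -exprMn -subr_sqr p2 q2 addrAC subrr add0r expr1n.
have pq0 : 0 < (p + q) ^+ 2 by lra.
rewrite -[(p - q) ^+ 2](mulfK (lt0r_neq0 pq0)) h2 div1r.
rewrite lef_pV2 ?posrE //.
Qed.

Lemma sum_inv4 {R : realType} (m : nat) :
  \sum_(0 <= k < m.+1) 4 / (4 * (k%:R : R) + 1) <= 4 + Hh R m.
Proof.
elim: m => [|m IH].
  by rewrite big_nat1 Hh0 mulr0 add0r; lra.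
rewrite big_nat_recr //= HhS.
have h : 4 / (4 * (m.+1%:R : R) + 1) <= (m.+1%:R)^-1.
  have hp : (0 : R) < m.+1%:R by rewrite ltr0n.
  rewrite ler_pdivrMr; last by lra.
  have -> : (m.+1%:R : R)^-1 * (4 * m.+1%:R + 1) = 4 + (m.+1%:R)^-1.
    by field; rewrite lt0r_neq0.
  have : 0 < (m.+1%:R : R)^-1 by rewrite invr_gt0 ltr0n.
  by move=> hz; rewrite lerDl ltW.
move: IH h; set u := \sum_(0 <= i < m.+1) _; set v := 4 / _; set w := Hh R m; set z := _^-1.
lra.
Qed.

Lemma test_vec {R : realType} (n : nat) : (1 <= n)%N ->
  let a0 := fun k : 'I_n => Num.sqrt (k.+1%:R : R) - Num.sqrt (k%:R) in
  hardy_lhs a0 = Hh R n /\ 0 < hardy_rhs a0 /\ 4 * hardy_rhs a0 <= 4 + Hh R n.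
Proof.
case: n => [//|n] _ a0; split; [|split].
- rewrite /hardy_lhs /Hh big_mkord; apply: eq_bigr => k _.
  rewrite /a0 (@sum_le_conv R n.+1 k (fun j => Num.sqrt (j.+1%:R : R) - Num.sqrt (j%:R)) (ltn_ord k)).
  rewrite telescope_sumr // sqrtr0 subr0 exprMn sqr_sqrtr ?ler0n //.
  by rewrite expr2 -mulrA mulVf ?mulr1 // pnatr_eq0.
- rewrite /hardy_rhs big_ord_recl /= /a0 /= sqrtr0 sqrtr1 subr0 expr1n.
  have : 0 <= \sum_(i < n) a0 (lift ord0 i) ^+ 2 by apply: sumr_ge0 => i _; exact: sqr_ge0.
  lra.
- have h1 : 4 * hardy_rhs a0 <= \sum_(0 <= k < n.+1) 4 / (4 * (k%:R : R) + 1).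
    rewrite /hardy_rhs mulr_sumr big_mkord; apply: ler_sum => k _.
    rewrite /a0 -[(nat_of_ord k).+1%:R]natr1.
    have := @sqrt_diff_le R k%:R (ler0n R k).
    set s := (_ - _) ^+ 2; set i := (_ + 1)^-1.
    rewrite -[4 / _]/(4 * i). lra.
  apply: le_trans h1 _; apply: le_trans (sum_inv4 n) _.
  rewrite lerD2l; apply: Hh_mono; exact: leqnSn.
Qed.

Theorem theorem1p1 (R : realType) (n : nat) (hn : (3 <= n)%N) :
  exists d : R, is_smallest_hardy_const n d /\
    4 * (1 - 4 / (ln (n%:R : R) + 4)) <= d /\
    d <= 4 * (1 - 8 / (ln (n%:R : R) + 4) ^+ 2).
Proof.
have n0 : (0 : R) < n%:R by rewrite ltr0n; apply: leq_trans hn.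
have L1 : 1 <= ln (n%:R : R).
  apply: le_trans (ln3_ge1 R) _.
  by rewrite ler_ln ?posrE ?ltr0n ?ler_nat //; apply: leq_trans hn.
set W := ln (n%:R : R) + 4.
have W5 : 5 <= W by rewrite /W; lra.
have HW : Hh R n.-1 <= W - 3.
  have h1 := @Hh_le_ln R n.-1 ltac:(lia).
  have h2 : ln (n.-1%:R : R) <= ln (n%:R).
    rewrite ler_ln ?posrE ?ltr0n ?ler_nat //; try lia.
  rewrite /W; lra.
have up : forall a : 'I_n -> R, hardy_lhs a <= 4 * (1 - 8 / W ^+ 2) * hardy_rhs a.
  by move=> a; apply: hardy_upper.
have rge0 : forall a : 'I_n -> R, 0 <= hardy_rhs a.
  by move=> a; apply: sumr_ge0 => i _; exact: sqr_ge0.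
set D := 4 * (1 - 8 / W ^+ 2).
set S := [set r : R | exists a : 'I_n -> R, 0 < hardy_rhs a /\ r = hardy_lhs a / hardy_rhs a]%classic.
have Sub : ubound S D.
  move=> r [a [ra ->]]; rewrite ler_pdivrMr //; exact: up.
have [lhs0 [rhs0 rhs4]] := @test_vec R n ltac:(lia).
set a0 := fun k : 'I_n => Num.sqrt (k.+1%:R : R) - Num.sqrt (k%:R).
have S0 : S (hardy_lhs a0 / hardy_rhs a0) by exists a0.
have hs : has_sup S by split; [exists (hardy_lhs a0 / hardy_rhs a0) | exists D].
exists (sup S); split; [split|split].
- move=> a.
  have [r0|rp] := eqVneq (hardy_rhs a) 0.
    by rewrite r0 mulr0; have := up a; rewrite r0 mulr0.
  have rp' : 0 < hardy_rhs a by rewrite lt0r rp rge0.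
  rewrite -ler_pdivrMr //; apply: sup_upper_bound => //; by exists a.
- move=> C hC; apply: ge_sup; first by exists (hardy_lhs a0 / hardy_rhs a0).
  move=> r [a [ra ->]]; rewrite ler_pdivrMr //; exact: hC.
- apply: le_trans (sup_upper_bound hs S0).
  rewrite ler_pdivlMr // lhs0.
  have hH : ln (n%:R : R) <= Hh R n.
    have := ln_le_Hh R n.-1; rewrite prednK; last by lia.
    move=> h; apply: le_trans h _; apply: Hh_mono; lia.
  have W0 : 0 < W by lra.
  have e : 4 * (1 - 4 / W) * hardy_rhs a0 = ln (n%:R : R) / W * (4 * hardy_rhs a0).
    by rewrite /W; field; rewrite lt0r_neq0 // -/W.
  rewrite e.
  have h1 : ln (n%:R : R) / W * (4 * hardy_rhs a0) <= ln (n%:R : R) / W * (4 + Hh R n).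
    apply: ler_wpM2l => //; apply: divr_ge0; lra.
  apply: le_trans h1 _.
  rewrite mulrAC ler_pdivrMr // /W.
  move: hH L1; set L := ln _; set H := Hh R n.
  nra.
- by apply: ge_sup; [exists (hardy_lhs a0 / hardy_rhs a0)|].
Qed.
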